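(* (i) There is $r^\Delta\in R_{\omega\cdot\omega+\omega}$ such that $\sigma(r^\Delta)\in Q_*$ and $\sigma(p\Lsh r^\Delta)\in Q_*$ for all $p\in R$. (ii) There is $r^{\mathrm{mult}}\in R_{\omega\cdot\omega+\omega}$ such that for every $\phi\in Q_*$ there is $r\in R_{\omega\cdot\omega+\omega}$ with $\sigma(r^{\mathrm{mult}})\circ\phi=\sigma(r)$.
   Context: Throughout, $\delta$ denotes a nonzero countable limit ordinal. Terms: variables are $x_{l,k}$ ($l,k\in\omega$), each taking values in $\{0,1\}$. A term $t$ is given by a finite sequence of variables $(v_0,\dots,v_{r-1})$ and a function $F:2^r\to2$; a variable $v$ is identified with the term $((v),\mathrm{id})$. An assignment $a$ maps variables to $\{0,1\}$ and extends to terms by $t\circ a=F(v_0\circ a,\dots,v_{r-1}\circ a)$. A substitution $\phi$ maps variables to terms; $t\circ\phi$ replaces each variable $v$ in $t$ by $\phi(v)$, and $\bar t\circ\phi=(t_i\circ\phi)_i$ for families. Terms are identified modulo $t=^*s$ iff $t\circ a=s\circ a$ for all assignments $a$. A term depends only on variables in $Y$ if it is $=^*$ to a term using only variables from $Y$. A term or variable $s$ is determined by terms $t_0,\dots,t_n$ if for all assignments $a,b$, $(t_i\circ a)_{i\le n}=(t_i\circ b)_{i\le n}$ implies $s\circ a=s\circ b$. $Q_*$: let $\tau(n,m)=n+\tfrac12(n+m)(n+m+1)$ and $(i,j)\unlhd(n,m)$ iff $\tau(i,j)\le\tau(n,m)$. $Q_*$ is the set of squares $\bar t=(t_{n,m})_{n,m\in\omega}$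 of terms with (1) $t_{n,m}$ depends only on $x_{i,j}$ with $(i,j)\unlhd(n,m)$, (2) each $x_{i,j}$ is determined by finitely many $t_{n,m}$; an element $\phi\in Q_*$ is regarded as the substitution $x_{i,j}\mapsto\phi_{i,j}$, and $\bar t\le\bar s$ iff $\bar t=\bar s\circ\phi$ for some $\phi\in Q_*$. The forcing $\tilde P$: a condition $\tilde p$ has height $\mathrm{ht}(\tilde p)<\omega_1$ and consists of, for every limit $\delta<\mathrm{ht}(\tilde p)$ and $n,m,k\in\omega$: a cofinal $\nu_{\delta,n,m}\subseteq\delta$ of order type $\omega$, with $\nu_{\delta,n,m_1}\cap\nu_{\delta,n,m_2}=\emptyset$ for $m_1\ne m_2$; a strictly increasing $j_{\delta,n,m}:\omega\to\omega$; and a surjective $f_{\delta,n,m,k}:2^{[j_{\delta,n,m}(k),\,j_{\delta,n,m}(k+1)-1]}\to2$; ordered by extension. For $\eta$ into $2$ with domain containing $\nu_{\delta,n,m}$, with $\zeta_i$ the $i$-th element of $\nu_{\delta,n,m}$, $g_{\delta,n,m,k}(\eta)=f_{\delta,n,m,k}((\eta(\zeta_i))_{j_{\delta,n,m}(k)\le i<j_{\delta,n,m}(k+1)})$. The set $R$: $R=\bigcup_{\delta<\omega_1}R_{\delta+\omega}$, where $p\in R_{\delta+\omega}$ consists of $\tilde p\in\tilde P$ with $\mathrm{ht}(\tilde p)=\delta+1$ and terms $\bar p=(p_{n,\alpha})_{n\in\omega,\alpha<\delta+\omega}$ such that $p_{n,\delta+m}=x_{n,m}$; for $\alpha<\delta$,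 $p_{n,\alpha}$ depends only on variables $x_{l,k}$ with $l<n$; and for all $n,m\in\omega$ and all limit $\alpha\le\delta$ there is $k_0$ such that for every assignment $a$, $p_{n,\alpha+m}\circ a=g_{\alpha,n,m,k}((p_{n+1,\zeta}\circ a)_{\zeta<\alpha})$ for all $k\ge k_0$ (computed from $\tilde p$). For $p\in R$, $\sigma(p)=(p_{n,m})_{n,m\in\omega}$. Stacking: for $p\in R_{\delta+\omega}$ and $q'\in R_{\delta'+\omega}$, $q=p\Lsh q'\in R_{\delta+\delta'+\omega}$ is defined by: $\tilde q$ agrees with $\tilde p$ on all limit indices $\le\delta$; for limit $\alpha$ with $\omega\le\alpha\le\delta'$, $\nu^q_{\delta+\alpha,n,m}=\{\delta+\beta:\beta\in\nu^{q'}_{\alpha,n,m}\}$, $j^q_{\delta+\alpha,n,m}=j^{q'}_{\alpha,n,m}$, $f^q_{\delta+\alpha,n,m,k}=f^{q'}_{\alpha,n,m,k}$; $q_{n,\delta+\alpha}=q'_{n,\alpha}$ for $\alpha<\delta'+\omega$; and $q_{n,\alpha}=p_{n,\alpha}\circ\phi$ for $\alpha<\delta$, where $\phi(x_{n,m})=q'_{n,m}$. *)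

(* Defs.v *)
From mathcomp Require Import all_boot.
Set Implicit Arguments.
Unset Strict Implicit.
Unset Printing Implicit Defensive.

Definition var := (nat * nat)%type.
Definition assignment := var -> bool.

(* Terms are taken modulo =*, i.e. represented by their evaluation map
   a |-> t o a; a genuine term is such a map depending on finitely many
   variables (see [is_term]). *)
Definition term := assignment -> bool.

Definition xvar (v : var) : term := fun a => a v.

Definition uses_only (t : term) (s : seq var) : Prop :=
  forall a b : assignment, (forall v, v \in s -> a v = b v) -> t a = t b.

Definition is_term (t : term) : Prop := exists s : seq var, uses_only t s.

Definition depends_only (t : term) (Y : var -> Prop) : Prop :=
  exists s : seq var, (forall v, v \in s -> Y v) /\ uses_only t s.

Definition subst (t : term) (phi : nat -> nat -> term) : term :=
  fun a => t (fun v => phi v.1 v.2 a).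

Definition tau (n m : nat) : nat := n + ((n + m) * (n + m + 1)) %/ 2.

Definition square := nat -> nat -> term.

Definition Qstar (t : square) : Prop :=
  (forall n m, is_term (t n m)) /\
  (forall n m, depends_only (t n m) (fun v => tau v.1 v.2 <= tau n m)) /\
  (forall i j, exists S : seq (nat * nat),
      forall a b : assignment,
        (forall nm, nm \in S -> t nm.1 nm.2 a = t nm.1 nm.2 b) ->
        a (i, j) = b (i, j)).

Definition sumlt (A B : Type) (ltA : A -> A -> Prop) (ltB : B -> B -> Prop)
  (x y : A + B) : Prop :=
  match x, y with
  | inl a, inl a' => ltA a a'
  | inl _, inr _ => True
  | inr _, inl _ => False
  | inr b, inr b' => ltB b b'
  end.

Definition ltn_rel (m n : nat) : Prop := (m < n)%N.

(* lexicographic order on nat * nat: order type omega * omega *)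
Definition lexlt (x y : nat * nat) : Prop :=
  (x.1 < y.1)%N \/ (x.1 = y.1 /\ (x.2 < y.2)%N).

(* A countable well-order J (possibly empty) without maximum.  The countable
   nonzero limit ordinals delta are exactly the ordinals omega + J for such J. *)
Definition cwo (J : Type) (lt : J -> J -> Prop) : Prop :=
  (forall x, ~ lt x x) /\
  (forall x y z, lt x y -> lt y z -> lt x z) /\
  (forall x y, lt x y \/ x = y \/ lt y x) /\
  well_founded lt /\
  (exists f : J -> nat, injective f) /\
  (forall x, exists y, lt x y).

Section Ord.
Variables (X : Type) (lt : X -> X -> Prop).

Definition is_limit (al : X) : Prop :=
  (exists be, lt be al) /\
  (forall be, lt be al -> exists ga, lt be ga /\ lt ga al).

Definition succ_of (al be : X) : Prop :=
  lt al be /\ forall ga, lt al ga -> ga = be \/ lt be ga.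

Inductive nth_succ : X -> nat -> X -> Prop :=
| ns0 al : nth_succ al 0 al
| nsS al m be ga : nth_succ al m be -> succ_of be ga -> nth_succ al m.+1 ga.
End Ord.

(* Positions (ordinals < delta + omega) : inl (inl m) = m (m < omega),
   inl (inr b) = omega + b, inr m = delta + m. *)
Definition pos (J : Type) := ((nat + J) + nat)%type.

Definition ltpos (J : Type) (ltJ : J -> J -> Prop) : pos J -> pos J -> Prop :=
  sumlt (sumlt ltn_rel ltJ) ltn_rel.

Definition delta_pos (J : Type) : pos J := inr 0.

(* Data of a condition: for a limit position al and n, m, k:
   c_nu al n m i = i-th element of nu_{al,n,m} (increasing enumeration),
   c_j al n m = j_{al,n,m},
   c_f al n m k = f_{al,n,m,k}, taking the list of values
      (eta(zeta_i))_{j(k) <= i < j(k+1)},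
   c_t n al = the term p_{n,al}. *)
Record cond (J : Type) := Cond {
  c_nu : pos J -> nat -> nat -> nat -> pos J;
  c_j : pos J -> nat -> nat -> nat -> nat;
  c_f : pos J -> nat -> nat -> nat -> seq bool -> bool;
  c_t : nat -> pos J -> term }.

Definition gfun (J : Type) (p : cond J) (al : pos J) (n m k : nat)
  (eta : pos J -> bool) : bool :=
  c_f p al n m k
    [seq eta (c_nu p al n m i) |
       i <- iota (c_j p al n m k) (c_j p al n m k.+1 - c_j p al n m k)].

Definition isR (J : Type) (ltJ : J -> J -> Prop) (p : cond J) : Prop :=
  let lt := ltpos ltJ in
  let le x y := lt x y \/ x = y in
  (* the forcing part p~ of height delta+1 *)
  (forall al n m, is_limit lt al -> le al (delta_pos J) ->
     (forall i, lt (c_nu p al n m i) al) /\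
     (forall i, lt (c_nu p al n m i) (c_nu p al n m i.+1)) /\
     (forall be, lt be al -> exists i, le be (c_nu p al n m i)) /\
     (forall m' i i', m <> m' -> c_nu p al n m i <> c_nu p al n m' i') /\
     (forall k, (c_j p al n m k < c_j p al n m k.+1)%N) /\
     (forall k (b : bool), exists s : seq bool,
         size s = (c_j p al n m k.+1 - c_j p al n m k)%N /\
         c_f p al n m k s = b)) /\
  (forall n al, is_term (c_t p n al)) /\
  (forall n m, c_t p n (inr m) =1 xvar (n, m)) /\
  (forall n al, lt al (delta_pos J) ->
     depends_only (c_t p n al) (fun v => (v.1 < n)%N)) /\
  (forall n m al, is_limit lt al -> le al (delta_pos J) ->
     forall be, nth_succ lt al m be ->
     exists k0, forall (a : assignment) k, (k0 <= k)%N ->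
       c_t p n be a = gfun p al n m k (fun ze => c_t p n.+1 ze a)).

Definition sigma (J : Type) (p : cond J) : square :=
  fun n m => c_t p n (inl (inl m)).

(* delta = omega + J, delta' = omega + J'; delta + delta' = omega + (J + (omega + J')). *)
Definition stackJ (J J' : Type) := (J + (nat + J'))%type.

Definition embL (J J' : Type) (x : pos J) : pos (stackJ J J') :=
  match x with
  | inl (inl m) => inl (inl m)
  | inl (inr b) => inl (inr (inl b))
  | inr m => inl (inr (inr (inl m)))
  end.

(* beta |-> delta + beta *)
Definition embR (J J' : Type) (x : pos J') : pos (stackJ J J') :=
  match x with
  | inl (inl m) => inl (inr (inr (inl m)))
  | inl (inr b) => inl (inr (inr (inr b)))
  | inr m => inr m
  end.

(* where the forcing data of q~ at a position comes from *)
Definition stack_src (J J' : Type) (x : pos (stackJ J J')) : pos J + pos J' :=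
  match x with
  | inl (inl m) => inl (inl (inl m))
  | inl (inr (inl b)) => inl (inl (inr b))
  | inl (inr (inr (inl 0))) => inl (inr 0)
  | inl (inr (inr (inl m))) => inr (inl (inl m))
  | inl (inr (inr (inr b))) => inr (inl (inr b))
  | inr m => inr (inr m)
  end.

Definition stack (J J' : Type) (p : cond J) (q' : cond J') : cond (stackJ J J') :=
  Cond
    (fun x n m i => match stack_src x with
                    | inl y => embL J' (c_nu p y n m i)
                    | inr y => embR J (c_nu q' y n m i) end)
    (fun x n m k => match stack_src x with
                    | inl y => c_j p y n m k
                    | inr y => c_j q' y n m k end)
    (fun x n m k => match stack_src x with
                    | inl y => c_f p y n m k
                    | inr y => c_f q' y n m k end)
    (fun n x => match x with
                | inl (inl m) => subst (c_t p n (inl (inl m))) (sigma q')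
                | inl (inr (inl b)) => subst (c_t p n (inl (inr b))) (sigma q')
                | inl (inr (inr y)) => c_t q' n (inl y)
                | inr m => c_t q' n (inr m)
                end).

(* Main.v *)
Require Import Defs.
From mathcomp Require Import all_boot zify.
From Stdlib Require Import Classical ClassicalEpsilon.
From Stdlib Require Cantor.
Set Implicit Arguments.
Unset Strict Implicit.

Definition ee (c k : nat) : nat := Cantor.to_nat (c, k).
Definition dd (p : nat) : nat * nat := Cantor.of_nat p.
Lemma dd_ee c k : dd (ee c k) = (c, k).
Proof. exact: Cantor.cancel_of_to. Qed.
Lemma dd_to w : dd (Cantor.to_nat w) = w.
Proof. exact: Cantor.cancel_of_to. Qed.
Lemma ee_ge c k : k <= ee c k.
Proof. have := Cantor.to_nat_non_decreasing c k. rewrite /ee. move=> H; apply/leP; lia. Qed.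

Fixpoint chain (tc : nat -> nat) (m i : nat) : nat :=
  match i with
  | 0 => ee (tc 0) (ee m 0)
  | i'.+1 => ee (tc i'.+1) (ee m (chain tc m i').+1)
  end.

Definition inner (tc : nat -> nat) (m i : nat) : nat :=
  match i with 0 => 0 | i'.+1 => (chain tc m i').+1 end.

Lemma chainE tc m i : chain tc m i = ee (tc i) (ee m (inner tc m i)).
Proof. by case: i. Qed.

Lemma chain_code tc m i : (dd (chain tc m i)).1 = tc i.
Proof. by rewrite chainE dd_ee. Qed.

Lemma chain_inc tc m i : chain tc m i < chain tc m i.+1.
Proof.
rewrite [chain _ _ i.+1]/=. apply: leq_trans (ee_ge _ _). exact: ee_ge.
Qed.

Lemma chain_incr tc m i j : i < j -> chain tc m i < chain tc m j.
Proof.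
elim: j => // j IH; rewrite ltnS leq_eqVlt => /orP [/eqP->|/IH h].
  exact: chain_inc.
exact: ltn_trans h (chain_inc _ _ _).
Qed.

Lemma chain_ge tc m i : i <= chain tc m i.
Proof. elim: i => [|i IH] //; exact: leq_ltn_trans IH (chain_inc _ _ _). Qed.

Lemma chain_inj tc tc' m m' i i' : chain tc m i = chain tc' m' i' -> m = m'.
Proof.
rewrite !chainE => /(congr1 dd); rewrite !dd_ee => -[_ /(congr1 dd)].
by rewrite !dd_ee => -[].
Qed.

Definition T s := (s * (s + 1)) %/ 2.
Lemma TS s : T s.+1 = T s + s.+1.
Proof.
rewrite /T. have -> : s.+1 * (s.+1 + 1) = s * (s + 1) + s.+1 * 2 by nia.
by rewrite divnDr ?dvdn_mull // mulnK.
Qed.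
Lemma T_lt s s' : s < s' -> T s + s < T s'.
Proof.
elim: s' => // s' IH; rewrite ltnS leq_eqVlt => /orP [/eqP->|/IH h].
  rewrite TS; lia.
rewrite TS; lia.
Qed.
Lemma tauE n m : tau n m = n + T (n + m).
Proof. by []. Qed.
Lemma tau_lt i j n m : i + j < n + m -> tau i j < tau n m.
Proof. rewrite !tauE => /T_lt; lia. Qed.
Lemma tau_le_sum i j n m : tau i j <= tau n m -> i + j <= n + m.
Proof. move=> h; rewrite leqNgt; apply/negP => /tau_lt; lia. Qed.
Lemma ee_to_inj w w' k k' : ee (Cantor.to_nat w) k = ee (Cantor.to_nat w') k' -> w = w'.
Proof. move=> /(congr1 dd); rewrite !dd_ee => -[] /(congr1 dd); rewrite !dd_to; done. Qed.
Definition tn (w : nat * nat) : nat := Cantor.to_nat w.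
Arguments tn : simpl never.
Lemma dd_tn w : dd (tn w) = w.
Proof. exact: dd_to. Qed.
Lemma ee_tn_inj w w' k k' : ee (tn w) k = ee (tn w') k' -> w = w'.
Proof. exact: ee_to_inj. Qed.

Notation P := (pos (nat * nat)).
Notation plt := (ltpos lexlt).

Lemma between_no (a m : nat) (y : P) :
  plt (inl (inr (a, m))) y -> plt y (inl (inr (a, m.+1))) -> False.
Proof.
case: y => [[y|[c d]]|y] //=; rewrite /lexlt /=; lia.
Qed.

Lemma classify (al : P) : is_limit plt al -> (plt al (delta_pos _) \/ al = delta_pos _) ->
  (exists a, al = inl (inr (a, 0))) \/ al = inr 0.
Proof.
case: al => [[k|[a m]]|m] [[be Hbe] Hl] Hd.
- clear Hd; case: k Hbe Hl => [|k]. by case: be => [[?|?]|?] //=; rewrite /ltn_rel.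
  move=> _ /(_ (inl (inl k))) []. by rewrite /= /ltn_rel.
  by move=> [[g|g]|g] //=; rewrite /ltn_rel; lia.
- clear Hd; case: m Hbe Hl => [|m]; first by left; exists a.
  move=> _ /(_ (inl (inr (a, m)))) []. by rewrite /= /lexlt /=; lia.
  move=> g [] /between_no h /h [].
- right; case: m Hd {Hbe Hl} => // m [] //=; rewrite /delta_pos /= /ltn_rel //.
Qed.

Lemma succ_unique (x z y : P) : plt x z -> (forall g, plt x g -> plt g z -> False) ->
  succ_of plt x y -> y = z.
Proof.
move=> hxz hb [hxy /(_ z hxz)] [//|hyz]. case: (hb y hxy hyz).
Qed.

Lemma nth_succ_blk a m be : nth_succ plt (inl (inr (a, 0))) m be -> be = inl (inr (a, m)).
Proof.
move e: (inl (inr (a, 0))) => al0 H; elim: H e => [al ->//|al k b g _ IH hs e].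
rewrite (IH e) in hs.
apply: succ_unique hs; first by rewrite /= /lexlt /=; lia.
exact: between_no.
Qed.

Lemma nth_succ_delta m be : nth_succ plt (inr 0) m be -> be = inr m.
Proof.
move e: (inr 0) => al0 H; elim: H e => [al ->//|al k b g _ IH hs e].
rewrite (IH e) in hs.
apply: succ_unique hs; first by rewrite /= /ltn_rel.
by move=> [[y|y]|y] //=; rewrite /ltn_rel; lia.
Qed.

Definition posvar (i : nat) : var := dd (dd i).1.

Definition dep (S : var -> seq (nat * nat)) (w : var) : nat :=
  foldr (fun nm acc => maxn (nm.1 + nm.2).+1 acc) 0 (S w).

Lemma dep_gt S w nm : nm \in S w -> nm.1 + nm.2 < dep S w.
Proof.
rewrite /dep; elim: (S w) => //= x s IH; rewrite in_cons => /orP [/eqP->|/IH h].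
  by rewrite leq_max leqnn.
by rewrite leq_max h orbT.
Qed.

Definition Dd (S : var -> seq (nat*nat)) (L a : nat) (w : var) : bool := (w.1 < L) && (dep S w <= L + a).

Definition Ef (phi : square) (L : nat) (w : var) : term :=
  fun asg => if w.1 + w.2 < L then phi w.1 w.2 asg else false.
Definition Vb (S : var -> seq (nat*nat)) (L a : nat) (w : var) : term :=
  fun asg => if Dd S L a.+1 w then asg w else false.

Definition Fw (phi : square) (S : var -> seq (nat*nat)) (w : var) (s : seq bool) : bool :=
  (epsilon (inhabits (fun _ : var => false))
     (fun a : assignment => [seq phi nm.1 nm.2 a | nm <- S w] = s)) w.

Definition Bw (S : var -> seq (nat*nat)) (w : var) := (size (S w)).+1.

Definition tcO (S : var -> seq (nat*nat)) (n m i : nat) : nat :=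
  let w := posvar m in
  if Dd S n 1 w then tn (nth (0,0) (S w) (i %% Bw S w))
  else tn (n.+1, 0).
Definition tcB (S : var -> seq (nat*nat)) (n a m : nat) : nat :=
  let w := posvar m in
  if Dd S n a.+2 w then (dd m).1 else tn (n.+1, 0).

Definition mk (phi : square) (S : var -> seq (nat * nat)) : cond (nat * nat) :=
  Cond
   (fun (al : pos (nat * nat)) n m i => match al with
    | inr _ => inl (inr (dep S (n, m) + i, ee (tn (n, m)) 0))
    | inl (inr (0, _)) => inl (inl (chain (tcO S n m) m i))
    | inl (inr (a.+1, _)) => inl (inr (a, chain (fun _ => tcB S n a m) m i))
    | inl (inl _) => al end)
   (fun (al : pos (nat * nat)) n m k => match al with
    | inl (inr (0, _)) => if Dd S n 1 (posvar m) then k * Bw S (posvar m) else k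
    | _ => k end)
   (fun (al : pos (nat * nat)) n m k s => match al with
    | inl (inr (0, _)) => if Dd S n 1 (posvar m)
                          then Fw phi S (posvar m) (take (size (S (posvar m))) s)
                          else head false s
    | _ => head false s end)
   (fun n (x : pos (nat * nat)) => match x with
    | inl (inl i) => Ef phi n (posvar i)
    | inl (inr (a, i)) => Vb S n a (posvar i)
    | inr m => xvar (n, m) end).

Lemma posvar_chain tc m i : posvar (chain tc m i) = dd (tc i).
Proof. by rewrite /posvar chain_code. Qed.
Lemma posvar_ee w k : posvar (ee (tn w) k) = w.
Proof. by rewrite /posvar dd_ee dd_tn. Qed.

Definition HSdet (phi : square) (S : var -> seq (nat * nat)) :=
  forall w (a b : assignment),
    (forall nm, nm \in S w -> phi nm.1 nm.2 a = phi nm.1 nm.2 b) -> a w = b w.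

Lemma Fw_spec phi S w a : HSdet phi S ->
  Fw phi S w [seq phi nm.1 nm.2 a | nm <- S w] = a w.
Proof.
move=> HS; rewrite /Fw.
set P := (fun a0 : assignment => _).
have := epsilon_spec (inhabits (fun _ : var => false)) P (ex_intro _ a erefl).
set a' := epsilon _ _; rewrite /P => /eq_in_map E.
apply: HS => nm /E; done.
Qed.

Lemma mk_forcing phi S al n m : HSdet phi S -> is_limit plt al -> (plt al (delta_pos _) \/ al = delta_pos _) ->
  let p := mk phi S in
     (forall i, plt (c_nu p al n m i) al) /\
     (forall i, plt (c_nu p al n m i) (c_nu p al n m i.+1)) /\
     (forall be, plt be al -> exists i, plt be (c_nu p al n m i) \/ be = c_nu p al n m i) /\
     (forall m' i i', m <> m' -> c_nu p al n m i <> c_nu p al n m' i') /\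
     (forall k, (c_j p al n m k < c_j p al n m k.+1)%N) /\
     (forall k (b : bool), exists s : seq bool,
         size s = (c_j p al n m k.+1 - c_j p al n m k)%N /\
         c_f p al n m k s = b).
Proof.
move=> HS Hl Hd p; case: (classify Hl Hd) => [[a ->]|->]; rewrite /p /=.
- case: a => [|a] /=.
  + split; first by [].
    split; first by move=> i; exact: chain_inc.
    split.
      move=> [[k|[x y]]|k] //=; last by rewrite /lexlt /=; lia.
      move=> _; exists k.+1; left; exact: chain_ge.
    split; first by move=> m' i i' hm [] /chain_inj.
    split.
      move=> k; case: ifP => // _; rewrite /Bw mulSn; lia.
    move=> k b; case: ifP => hD.
      exists (rcons [seq phi nm.1 nm.2 (fun _ => b) | nm <- S (posvar m)] false).
      split; first by rewrite size_rcons size_map /Bw mulSn; lia.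
      rewrite -cats1 take_cat size_map ltnn subnn take0 cats0.
      by rewrite Fw_spec.
    by exists [:: b]; split => //; rewrite subSnn.
  + split; first by move=> i; rewrite /lexlt /=; left.
    split; first by move=> i; rewrite /lexlt /=; right; split => //; exact: chain_inc.
    split.
      move=> [[k|[x y]]|k] //=; first by exists 0; left.
      rewrite /lexlt /= => -[hx|[hx hy]]; last by [].
      rewrite ltnS leq_eqVlt in hx; case/orP: hx => [/eqP ->|hx].
        exists y.+1; left; right; split => //; exact: chain_ge.
      by exists 0; left; left.
    split; first by move=> m' i i' hm [] /chain_inj.
    split; first by [].
    by move=> k b; exists [:: b]; split => //; rewrite subSnn.
- split; first by [].
  split; first by move=> i; rewrite /lexlt /=; left; lia.
  split.
    move=> [[k|[x y]]|k] //=; first by exists 0; left.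
    by move=> _; exists x.+1; left; left => /=; lia.
  split.
    move=> m' i i' hm E; apply: hm.
    have : ee (tn (n, m)) 0 = ee (tn (n, m')) 0 by case: E.
    by move/ee_tn_inj => -[].
  split; first by [].
  by move=> k b; exists [:: b]; split => //; rewrite subSnn.
Qed.

Lemma take_iota_mod (h : nat -> bool) s k :
  take s [seq h (i %% s.+1) | i <- iota (k * s.+1) (k.+1 * s.+1 - k * s.+1)] =
  [seq h i | i <- iota 0 s].
Proof.
have -> : k.+1 * s.+1 - k * s.+1 = s.+1 by rewrite mulSn; lia.
rewrite -[k * s.+1]addn0 iotaDl -map_comp.
have -> : [seq ((fun i : nat => h (i %% s.+1)) \o addn (k * s.+1)) i | i <- iota 0 s.+1] =
   [seq h i | i <- iota 0 s.+1].
  apply/eq_in_map => i; rewrite mem_iota add0n => hi /=.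
  by rewrite modnMDl modn_small.
by rewrite -addn1 iotaD map_cat take_size_cat // size_map size_iota.
Qed.

Lemma my_map_nth_iota (T : eqType) (g : T -> bool) x0 (s : seq T) :
  [seq g (nth x0 s i) | i <- iota 0 (size s)] = [seq g x | x <- s].
Proof. by rewrite -[in RHS](mkseq_nth x0 s) /mkseq -map_comp. Qed.

Lemma posvar_to w k : posvar (ee (tn w) k) = w.
Proof. by rewrite /posvar dd_ee dd_tn. Qed.

Lemma mk_isR phi S :
  (forall n m, is_term (phi n m)) ->
  (forall n m, depends_only (phi n m) (fun v => tau v.1 v.2 <= tau n m)) ->
  HSdet phi S -> isR lexlt (mk phi S).
Proof.
move=> Ht Hdp HS; rewrite /isR; cbv zeta.

split.
  move=> al n m Hl Hd.
  exact: mk_forcing.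
split.
  move=> n [[i|[a i]]|k] /=.
  - rewrite /Ef; case: ((posvar i).1 + (posvar i).2 < n); last by exists [::].
    case: (Ht (posvar i).1 (posvar i).2) => s hs; exists s => a b h; exact: hs.
  - exists [:: posvar i] => a0 b h; rewrite /Vb; case: (Dd _ _ _ _) => //; apply: h; exact: mem_head.
  - exists [:: (n, k)] => a b h; apply: h; exact: mem_head.
split; first by [].
split.
  move=> n [[i|[a i]]|k] //= _.
  - rewrite /Ef; case hc: ((posvar i).1 + (posvar i).2 < n); last by exists [::]; split => // a0 b.
    case: (Hdp (posvar i).1 (posvar i).2) => s [hs1 hs2]; exists s; split => //.
    move=> v /hs1 /tau_le_sum; lia.
  - rewrite /Vb; case hc: (Dd S n a.+1 (posvar i)); last by exists [::]; split => // a0 b.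
    exists [:: posvar i]; split.
      by move=> v; rewrite inE => /eqP ->; move: hc; rewrite /Dd => /andP [].
    by move=> a0 b h; rewrite h // mem_head.
move=> n m al Hl Hd be Hs.
case: (classify Hl Hd) => [[a ea]|ed]; subst al.
- have -> := nth_succ_blk Hs; case: a {Hs Hl Hd} => [|a].
  + exists 0 => asg k _; rewrite /gfun /=.
    rewrite /Vb; case: ifP => hD.
      rewrite -(Fw_spec (phi:=phi) (S:=S)) //; congr Fw.
      rewrite (eq_map (g := fun i => Ef phi n.+1 (nth (0,0) (S (posvar m)) (i %% Bw S (posvar m))) asg)); last first.
        by move=> i; rewrite /= posvar_chain /tcO hD dd_tn.
      rewrite /Bw (take_iota_mod (fun i => Ef phi n.+1 (nth (0,0) (S (posvar m)) i) asg)).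
      rewrite (@my_map_nth_iota _ (fun nm => Ef phi n.+1 nm asg) (0,0)).
      apply/esym/eq_in_map => nm /dep_gt h.
      rewrite /Ef; move: hD; rewrite /Dd => /andP [_ h2].
      by rewrite ifT //; lia.
    by rewrite subSnn /= posvar_chain /tcO hD dd_tn /Ef /= addn0 ltnn.
  + exists 0 => asg k _; rewrite /gfun /= subSnn /= posvar_chain /tcB /Vb.
    case: ifP => hD.
      rewrite ifT //; move: hD; rewrite /Dd /posvar => /andP [h1 h2]; apply/andP; split; lia.
    by rewrite dd_tn /Dd ltnn.
- have -> := nth_succ_delta Hs.
  exists 0 => asg k _; rewrite /gfun /= subSnn /=.
  rewrite posvar_to /Vb /Dd /=.
  rewrite ifT //; apply/andP; split; lia.
Qed.

Lemma wf_ltn : well_founded ltn_rel.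
Proof.
move=> n; elim: n {-2}n (leqnn n) => [|n IH] m hm.
  constructor => y; rewrite /ltn_rel => hy; exfalso; move: hm hy; clear; lia.
constructor => y; rewrite /ltn_rel => hy; apply: IH; move: hm hy; clear; lia.
Qed.

Lemma wf_sumlt (A B : Type) (ltA : A -> A -> Prop) (ltB : B -> B -> Prop) :
  well_founded ltA -> well_founded ltB -> well_founded (sumlt ltA ltB).
Proof.
move=> wA wB.
have hA : forall a, Acc (sumlt ltA ltB) (inl a).
  move=> a; induction (wA a) as [a _ IH]; constructor.
  intros [y|y] hy; [apply: IH; exact: hy|destruct hy].
intros [a|b]; first exact: hA.
induction (wB b) as [b _ IH]; constructor.
intros [y|y] hy; [exact: hA|apply: IH; exact: hy].
Qed.

Lemma wf_pos (J : Type) (ltJ : J -> J -> Prop) : well_founded ltJ -> well_founded (ltpos ltJ).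
Proof. move=> w; rewrite /ltpos; exact: (wf_sumlt (wf_sumlt wf_ltn w) wf_ltn). Qed.

Lemma pos_trans (J : Type) (ltJ : J -> J -> Prop) :
  (forall x y z, ltJ x y -> ltJ y z -> ltJ x z) ->
  forall x y z : pos J, ltpos ltJ x y -> ltpos ltJ y z -> ltpos ltJ x z.
Proof.
move=> tr [[x|x]|x] [[y|y]|y] [[z|z]|z] //=; rewrite /ltn_rel; try exact: tr; move=> h1 h2; exact: ltn_trans h1 h2.
Qed.

Lemma pos_trich (J : Type) (ltJ : J -> J -> Prop) :
  (forall x y, ltJ x y \/ x = y \/ ltJ y x) ->
  forall x y : pos J, ltpos ltJ x y \/ x = y \/ ltpos ltJ y x.
Proof.
move=> tr [[x|x]|x] [[y|y]|y] /=; rewrite /ltn_rel; auto.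
- case: (ltngtP x y); auto => ->; auto.
- case: (tr x y) => [|[->|]]; auto.
- case: (ltngtP x y); auto => ->; auto.
Qed.

Lemma decomp (J : Type) (ltJ : J -> J -> Prop) : cwo ltJ -> forall z : pos J,
  (exists k, z = inl (inl k)) \/
  exists be m, is_limit (ltpos ltJ) be /\
     (ltpos ltJ be (delta_pos J) \/ be = delta_pos J) /\
     nth_succ (ltpos ltJ) be m z /\ (ltpos ltJ be z \/ be = z).
Proof.
move=> [irr [tr [tri [wf [_ nomax]]]]].
have lim0 : is_limit (ltpos ltJ) (delta_pos J).
  split; first by exists (inl (inl 0)).
  move=> [[k|b]|k] hb.
  - by exists (inl (inl k.+1)); split => //=; rewrite /ltn_rel.
  - by case: (nomax b) => y hy; exists (inl (inr y)).
  - by move: hb; rewrite /= /ltn_rel.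
have nsd : forall m, nth_succ (ltpos ltJ) (delta_pos J) m (inr m).
  elim=> [|m IH]; first exact: ns0.
  apply: nsS IH _; split; first by rewrite /= /ltn_rel.
  move=> [[g|g]|g] //=; rewrite /ltn_rel => hg.
  case: (ltngtP m.+1 g) => [h|h|->]; auto; lia.
move=> z; elim: (wf_pos wf z) => {}z _ IH.
case: z IH => [[k|b]|m] IH; first by left; exists k.
- right. case: (classic (is_limit (ltpos ltJ) (inl (inr b)))) => hl.
    exists (inl (inr b)), 0; split => //; split; first by left.
    split; [exact: ns0|by right].
  have [y [hy hb]] : exists y, ltpos ltJ y (inl (inr b)) /\
      forall g, ltpos ltJ y g -> ltpos ltJ g (inl (inr b)) -> False.
    apply: NNPP => hn; apply: hl; split; first by exists (inl (inl 0)).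
    move=> y hy; apply: NNPP => hg; apply: hn; exists y; split => // g h1 h2.
    by apply: hg; exists g.
  case: y hy hb IH => [[k|b']|k] //= hy hb IH.
    by case: (hb (inl (inl k.+1))) => //=; rewrite /ltn_rel.
  case: (IH (inl (inr b')) hy) => [[k] //|[be [m [h1 [h2 [h3 h4]]]]]].
  exists be, m.+1; split => //; split => //; split.
    apply: nsS h3 _; split => // g hg.
    case: (pos_trich tri g (inl (inr b))) => [h|[->|h]]; auto.
    by case: (hb g).
  left; case: h4 => [h4|e4]; [by apply: (pos_trans tr h4)|by rewrite e4].
- right; exists (delta_pos J), m; split => //; split; first by right.
  split => //; case: m {IH} => [|m]; [by right|by left; rewrite /= /ltn_rel].
Qed.

Definition agree (J : Type) (p : cond J) (S : seq (nat * nat)) (a b : assignment) :=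
  forall nm, nm \in S -> sigma p nm.1 nm.2 a = sigma p nm.1 nm.2 b.

Lemma agree_catl J (p : cond J) S1 S2 a b : agree p (S1 ++ S2) a b -> agree p S1 a b.
Proof. by move=> h nm hn; apply: h; rewrite mem_cat hn. Qed.
Lemma agree_catr J (p : cond J) S1 S2 a b : agree p (S1 ++ S2) a b -> agree p S2 a b.
Proof. by move=> h nm hn; apply: h; rewrite mem_cat hn orbT. Qed.

Lemma combine J (p : cond J) (f : nat -> term) (I : seq nat) :
  (forall i, exists S, forall a b, agree p S a b -> f i a = f i b) ->
  exists S, forall a b, agree p S a b -> [seq f i a | i <- I] = [seq f i b | i <- I].
Proof.
move=> h; elim: I => [|i I [S hS]]; first by exists [::].
case: (h i) => Si hi; exists (Si ++ S) => a b hab /=.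
by rewrite (hi a b (agree_catl hab)) (hS a b (agree_catr hab)).
Qed.

Lemma det_pos (J : Type) (ltJ : J -> J -> Prop) (p : cond J) : cwo ltJ -> isR ltJ p ->
  forall z n, exists S, forall a b, agree p S a b -> c_t p n z a = c_t p n z b.
Proof.
move=> hc hR; have [irr [tr [tri [wf _]]]] := hc.
move: hR; rewrite /isR; cbv zeta => -[hF [_ [_ [_ hL]]]].
move=> z; elim: (wf_pos wf z) => {}z _ IH n.
case: (decomp hc z) => [[k ->]|[be [m [h1 [h2 [h3 h4]]]]]].
  exists [:: (n, k)] => a b h; exact: (h (n, k) (mem_head _ _)).
case: (hL n m be h1 h2 z h3) => k0 hk.
have [hnu _] := hF be n m h1 h2.
have hlt : forall i, ltpos ltJ (c_nu p be n m i) z.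
  move=> i; case: h4 => [h4|<-]; last exact: hnu.
  exact: (pos_trans tr (hnu i) h4).
case: (@combine J p (fun i => c_t p n.+1 (c_nu p be n m i))
          (iota (c_j p be n m k0) (c_j p be n m k0.+1 - c_j p be n m k0))).
  move=> i; exact: IH (hlt i) n.+1.
move=> S hS; exists S => a b hab.
rewrite (hk a k0 (leqnn _)) (hk b k0 (leqnn _)) /gfun.
by rewrite (hS a b hab).
Qed.

Lemma det_var (J : Type) (ltJ : J -> J -> Prop) (p : cond J) : cwo ltJ -> isR ltJ p ->
  forall n m, exists S, forall a b, agree p S a b -> a (n, m) = b (n, m).
Proof.
move=> hc hR n m; case: (det_pos hc hR (inr m) n) => S hS; exists S => a b h.
have [_ [_ [hx _]]] := hR.
have := hx n m a; have := hx n m b; rewrite /xvar => <- <-; exact: hS.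
Qed.

Definition phi0 : square := fun n m => xvar (n, m).
Definition S0 (w : var) : seq (nat * nat) := [:: w].
Definition rD := mk phi0 S0.

Lemma rD_isR : isR lexlt rD.
Proof.
apply: mk_isR.
- by move=> n m; exists [:: (n, m)] => a b h; apply: h; exact: mem_head.
- move=> n m; exists [:: (n, m)]; split; first by move=> v; rewrite inE => /eqP ->.
  by move=> a b h; apply: h; exact: mem_head.
- by move=> [u v] a b /(_ (u, v)); rewrite mem_head => /(_ erefl).
Qed.

Definition supD (l k : nat) : seq var :=
  if (posvar k).1 + (posvar k).2 < l then [:: posvar k] else [::].

Lemma supD_uses l k : uses_only (sigma rD l k) (supD l k).
Proof.
rewrite /supD /sigma /= /Ef; case: ifP => _ a b h //.
by rewrite /phi0 /xvar -!surjective_pairing; apply: h; rewrite inE.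
Qed.

Lemma supD_lt l k w : w \in supD l k -> w.1 + w.2 < l.
Proof. by rewrite /supD; case: ifP => // h; rewrite inE => /eqP ->. Qed.

Lemma sigma_rD_var i j a : sigma rD (i + j).+1 (ee (tn (i, j)) 0) a = a (i, j).
Proof. by rewrite /sigma /= /Ef posvar_to /= ltnSn. Qed.

Lemma rD_Qstar : Qstar (sigma rD).
Proof.
split; first by move=> n m; exists (supD n m); exact: supD_uses.
split.
  move=> n m; exists (supD n m); split; last exact: supD_uses.
  move=> v /supD_lt h; apply: ltnW; apply: tau_lt; exact: leq_trans h (leq_addr m n).
move=> i j; exists [:: ((i + j).+1, ee (tn (i, j)) 0)] => a b h.
by rewrite -!sigma_rD_var; exact: (h _ (mem_head _ _)).
Qed.

Lemma subst_uses t s (ph : square) (sup : var -> seq var) :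
  uses_only t s -> (forall v, uses_only (ph v.1 v.2) (sup v)) ->
  uses_only (subst t ph) (flatten [seq sup v | v <- s]).
Proof.
move=> ht hp a b h; rewrite /subst; apply: ht => v hv; apply: hp => w hw.
apply: h; apply/flatten_mapP; by exists v.
Qed.

Lemma stack_Qstar (J : Type) (ltJ : J -> J -> Prop) (p : cond J) :
  cwo ltJ -> isR ltJ p -> Qstar (sigma (stack p rD)).
Proof.
move=> hc hR; have hR' := hR; move: hR'; rewrite /isR; cbv zeta.
move=> [_ [hT [_ [hD _]]]].
split.
  move=> n m; case: (hT n (inl (inl m))) => s hs.
  exists (flatten [seq supD v.1 v.2 | v <- s]).
  by apply: subst_uses hs _ => v; exact: supD_uses.
split.
  move=> n m; case: (hD n (inl (inl m)) I) => s [hs1 hs2].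
  exists (flatten [seq supD v.1 v.2 | v <- s]); split.
    move=> w /flatten_mapP [v /hs1 hv /supD_lt hw].
    apply: ltnW; apply: tau_lt => /=; exact: ltn_trans hw (leq_trans hv (leq_addr m n)).
  exact (subst_uses (ph := sigma rD) (sup := fun v => supD v.1 v.2) hs2 (fun v => @supD_uses v.1 v.2)).
move=> i j.
case: (det_var hc hR (i + j).+1 (ee (tn (i, j)) 0)) => S hS.
exists S => a b h.
rewrite -(sigma_rD_var i j a) -(sigma_rD_var i j b).
exact: (hS (fun v => sigma rD v.1 v.2 a) (fun v => sigma rD v.1 v.2 b) h).
Qed.

Theorem mainTheorem15 :
  (exists rD : cond (nat * nat),
     isR lexlt rD /\ Qstar (sigma rD) /\
     (forall (J : Type) (ltJ : J -> J -> Prop) (p : cond J),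
        cwo ltJ -> isR ltJ p -> Qstar (sigma (stack p rD)))) /\
  (exists rM : cond (nat * nat),
     isR lexlt rM /\
     (forall phi : square, Qstar phi ->
        exists r : cond (nat * nat),
          isR lexlt r /\
          (forall n m, subst (sigma rM n m) phi =1 sigma r n m))).
Proof.
split.
  exists rD; split; first exact: rD_isR.
  split; first exact: rD_Qstar.
  move=> J ltJ p hc hR; exact: stack_Qstar hc hR.
exists rD; split; first exact: rD_isR.
move=> phi [H1 [H2 H3]].
pose Sp (w : var) := proj1_sig (constructive_indefinite_description _ (H3 w.1 w.2)).
have HS : HSdet phi Sp.
  move=> w a b h.
  have := proj2_sig (constructive_indefinite_description _ (H3 w.1 w.2)) a b h.
  by rewrite -surjective_pairing.
exists (mk phi Sp); split; first exact: mk_isR.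
move=> n m a; rewrite /subst /sigma /= /Ef.
by case: ifP.
Qed.
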